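(* Let $\mathbb{X},\mathbb{Y}$ be finite-dimensional real Banach spaces and let $T\in\mathbb{L}(\mathbb{X},\mathbb{Y})$ be bijective. Then $T$ preserves parallel pairs if and only if $T$ preserves TEA pairs.
   Context: $(x,y)$ is a parallel pair if $\|x+\lambda y\|=\|x\|+\|y\|$ for some scalar $\lambda$ with $|\lambda|=1$; $(x,y)$ is a TEA pair if $\|x+y\|=\|x\|+\|y\|$. $T$ preserves parallel (resp. TEA) pairs if for all $x,y\in\mathbb{X}$, $(x,y)$ a parallel (resp. TEA) pair implies $(Tx,Ty)$ is a parallel (resp. TEA) pair. *)

(* Defs.v *)
From HB Require Import structures.
From mathcomp Require Import all_boot all_order all_algebra.
From mathcomp Require Import all_classical all_reals all_analysis.
Set Implicit Arguments. Unset Strict Implicit. Unset Printing Implicit Defensive.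
Import Order.TTheory GRing.Theory Num.Theory.
Import numFieldNormedType.Exports.
Local Open Scope ring_scope.

Definition finite_dim (R : realType) (V : lmodType R) : Prop :=
  exists (n : nat) (f : {linear 'rV[R]_n -> V}), bijective f.

Definition parallel_pair (R : realType) (X : normedModType R) (x y : X) : Prop :=
  exists l : R, `|l| = 1 /\ `|x + l *: y| = `|x| + `|y|.

Definition TEA_pair (R : realType) (X : normedModType R) (x y : X) : Prop :=
  `|x + y| = `|x| + `|y|.

Definition preserves_parallel (R : realType) (X Y : normedModType R) (T : X -> Y) : Prop :=
  forall x y : X, parallel_pair x y -> parallel_pair (T x) (T y).

Definition preserves_TEA (R : realType) (X Y : normedModType R) (T : X -> Y) : Prop :=
  forall x y : X, TEA_pair x y -> TEA_pair (T x) (T y).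

(* Main.v *)
Require Import Defs.
From HB Require Import structures.
From mathcomp Require Import all_boot all_order all_algebra.
From mathcomp Require Import all_classical all_reals all_analysis.
From mathcomp Require Import ring lra.
Import Order.TTheory GRing.Theory Num.Theory.
Import numFieldNormedType.Exports.
Local Open Scope ring_scope.

Lemma unit_sign (R : realType) (l : R) : `|l| = 1 -> l = 1 \/ l = -1.
Proof.
have [l0|l0] := leP 0 l.
  by rewrite ger0_norm // => ->; left.
by rewrite ltr0_norm // => /eqP; rewrite eqr_oppLR => /eqP ->; right.
Qed.

Lemma tea_comb (R : realType) (X : normedModType R) (x y : X) (a b : R) :
  `|x + y| = `|x| + `|y| -> 0 <= a -> 0 <= b ->
  `|a *: x + b *: y| = a * `|x| + b * `|y|.
Proof.
move=> H a0 b0; apply/le_anti/andP; split.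
  apply: (le_trans (ler_normD _ _)).
  by rewrite !normrZ !ger0_norm.
have [ab|ba] := leP b a.
  have E : a *: (x + y) = (a *: x + b *: y) + (a - b) *: y.
    by rewrite scalerDr scalerBl addrACA subrr addr0.
  have : `|a *: (x + y)| <= `|a *: x + b *: y| + (a - b) * `|y|.
    rewrite E; apply: (le_trans (ler_normD _ _)).
    by rewrite normrZ ger0_norm ?subr_ge0.
  by rewrite normrZ H ger0_norm // mulrDr mulrBl => h; lra.
have E : b *: (x + y) = (a *: x + b *: y) + (b - a) *: x.
  by rewrite scalerDr scalerBl [RHS]addrC addrA subrK.
have : `|b *: (x + y)| <= `|a *: x + b *: y| + (b - a) * `|x|.
  rewrite E; apply: (le_trans (ler_normD _ _)).
  by rewrite normrZ ger0_norm // subr_ge0 ltW.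
by rewrite normrZ H ger0_norm // mulrDr mulrBl => h; lra.
Qed.

Lemma cont_seg (R : realType) (Y : normedModType R) (u w : Y) :
  continuous (fun t : R => `|u + t *: w|).
Proof.
move=> t.
apply: (@continuous_comp _ _ _ (fun t : R => u + t *: w) (@Num.norm _ Y)).
  apply: cvgD; first exact: cvg_cst.
  apply: cvgZ; [exact: cvg_id | exact: cvg_cst].
exact: norm_continuous.
Qed.

Lemma mid (R : realType) (Y : normedModType R) (u w : Y) (s t r : R) :
  s + t = 2 * r -> (u + s *: w) + (u + t *: w) = 2 *: (u + r *: w).
Proof.
move=> h; rewrite addrACA -scalerDl h scalerDr scalerA.
by rewrite -[2 *: u]/((1 + 1) *: u) scalerDl scale1r.
Qed.

Theorem mainTheorem13 (R : realType) (X Y : completeNormedModType R)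
  (hX : finite_dim X) (hY : finite_dim Y)
  (T : {linear X -> Y}) (hT : bijective T) :
  preserves_parallel T <-> preserves_TEA T.
Proof.
split; last first.
  move=> HT x y [l [l1 Hl]]; exists l; split => //.
  have := HT x (l *: y); rewrite /TEA_pair linearZZ !normrZ l1 !mul1r.
  by move=> /(_ Hl).
move=> HP x y Hxy; rewrite /TEA_pair.
set u := T x; set v := T y.
pose p t := u + t *: (v - u).
pose q t := x + t *: (y - x).
have Tq : forall t, T (q t) = p t.
  by move=> t; rewrite /q /p linearD linearZ linearB.
have qE : forall t, q t = (1 - t) *: x + t *: y.
  by move=> t; rewrite /q scalerBr scalerBl scale1r addrA addrAC.
have nq : forall t, 0 <= t <= 1 -> `|q t| = (1 - t) * `|x| + t * `|y|.
  move=> t /andP[t0 t1]; rewrite qE; apply: tea_comb => //; lra.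
have Hpar : forall s t, 0 <= s <= 1 -> 0 <= t <= 1 -> parallel_pair (p s) (p t).
  move=> s t hs ht; rewrite -!Tq; apply: HP; exists 1; split; first by rewrite normr1.
  rewrite scale1r (nq s hs) (nq t ht).
  have -> : q s + q t = ((1 - s) + (1 - t)) *: x + (s + t) *: y.
    by rewrite !qE !scalerDl addrACA.
  move: hs ht => /andP[? ?] /andP[? ?].
  rewrite tea_comb //; [lra | lra | lra].
case: (pselect (exists t, 0 <= t <= 1 /\ p t = 0)) => [[t [ht pt0]]|nz].
  have q0 : q t = 0.
    apply: (bij_inj hT); by rewrite Tq pt0 linear0.
  have := nq t ht; rewrite q0 normr0 => e.
  move: ht => /andP[t0 t1].
  have h1 : 0 <= (1 - t) * `|x| by rewrite mulr_ge0 // subr_ge0.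
  have h2 : 0 <= t * `|y| by rewrite mulr_ge0.
  have [tl1|te1] := ltP t 1.
    have : (1 - t) * `|x| = 0 by lra.
    move/eqP; rewrite mulf_eq0 normr_eq0 => /orP[|/eqP x0]; first by rewrite subr_eq0 => /eqP ?; lra.
    by rewrite /u x0 linear0 normr0 !add0r.
  have : t * `|y| = 0 by lra.
  move/eqP; rewrite mulf_eq0 normr_eq0 => /orP[|/eqP y0]; first by move=> /eqP ?; lra.
  by rewrite /v y0 linear0 normr0 !addr0.
have nzp : forall t, 0 <= t <= 1 -> `|p t| > 0.
  move=> t ht; rewrite normr_gt0; apply/eqP => pt0; apply: nz; by exists t.
have [c hc cmin] : exists2 c, c \in `[(0:R), 1]%R & forall t, t \in `[(0:R), 1]%R -> `|p c| <= `|p t|.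
  apply: EVT_min => //; apply: continuous_subspaceT; exact: cont_seg.
have hc' : 0 <= c <= 1 by move: hc; rewrite in_itv.
have cmin' : forall t, 0 <= t <= 1 -> `|p c| <= `|p t|.
  by move=> t ht; apply: cmin; rewrite in_itv.
set m := `|p c|.
have m0 : 0 < m by apply: nzp.
set d := `|v - u|.
have d0 : 0 <= d by rewrite /d normr_ge0.
set M := (Num.trunc (d / m)).+1.
have dM : d < M%:R * m.
  by rewrite -ltr_pdivrMr //; exact: truncnS_gt.
have M0 : (0 : R) < M%:R by rewrite ltr0n.
set N := (M + M)%N.
have NE : (N%:R : R) = M%:R + M%:R by rewrite natrD.
set k := (N%:R : R)^-1.
have k0 : 0 < k by rewrite invr_gt0 NE; lra.
have Nk : N%:R * k = 1 by rewrite mulfV // NE; lra.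
have kd : k * d < m.
  have : d < N%:R * m by rewrite NE; nra.
  rewrite -ltr_pdivrMl; last by rewrite NE; lra.
  by rewrite mulrC.
pose H (j : nat) := `|p (j%:R * k)|.
have grid : forall j, (j <= N)%N -> 0 <= j%:R * k <= 1.
  move=> j jN; apply/andP; split; first by rewrite mulr_ge0 // ltW.
  by rewrite -[X in _ <= X]Nk ler_pM2r // ler_nat.
have Hm : forall j, (j <= N)%N -> m <= H j.
  by move=> j jN; apply: cmin'; apply: grid.
have rec : forall j, (j.+2 <= N)%N -> H j + H j.+2 = 2 * H j.+1.
  move=> j jN.
  have g0 := grid j (leq_trans (leqnSn _) (ltnW jN)).
  have g2 := grid j.+2 jN.
  have [l [l1 Hl]] := Hpar _ _ g0 g2.
  have [l1e|lm1] := unit_sign _ _ l1.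
    rewrite l1e in Hl.
    rewrite scale1r /p (@mid _ _ _ _ _ _ (j.+1%:R * k)) in Hl.
      by rewrite /H -Hl normrZ ger0_norm.
    by rewrite !mulrSr; ring.
  rewrite lm1 scaleN1r in Hl.
  have : `|p (j%:R * k) - p (j.+2%:R * k)| = 2 * k * d.
    rewrite /p opprD addrACA subrr add0r -scalerBl normrZ.
    have -> : j%:R * k - j.+2%:R * k = - (2 * k) by rewrite !mulrSr; ring.
    by rewrite normrN ger0_norm //; lra.
  rewrite Hl => e.
  have := Hm j (leq_trans (leqnSn _) (ltnW jN)).
  have := Hm j.+2 jN.
  rewrite /H; lra.
set a := H 0%N.
set del := H 1%N - H 0%N.
have ind : forall j, (j < N)%N -> H j = a + j%:R * del /\ H j.+1 = a + j.+1%:R * del.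
  elim=> [|j IH] jN.
    by rewrite /a /del mul0r addr0; split => //; rewrite mul1r addrC subrK.
  have [IH1 IH2] := IH (ltnW jN).
  split => //.
  have := rec j jN.
  rewrite IH1 IH2 !mulrSr => h.
  lra.
have HN : H N = `|v|.
  by rewrite /H Nk /p scale1r addrC subrK.
have Ha : a = `|u| by rewrite /a /H mul0r /p scale0r addr0.
have HM : `|u + v| = 2 * H M.
  have -> : u + v = p 0 + p 1 by rewrite /p scale0r addr0 scale1r [u + (v - u)]addrC subrK.
  rewrite /p (@mid _ _ _ _ 0 1 (M%:R * k)).
    by rewrite normrZ ger0_norm.
  rewrite add0r /k NE; field; lra.
have Npos : (0 < N)%N by rewrite addn_gt0.
have NN : (N.-1 < N)%N by rewrite ltn_predL.
have [_ HN'] := ind N.-1 NN.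
rewrite (prednK Npos) HN NE mulrDl in HN'.
have MN : (M < N)%N by rewrite /N -{1}[M]addn0 ltn_add2l.
have [HMj _] := ind M MN.
rewrite HM HMj -Ha; lra.
Qed.
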